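(* Let $n$ be an odd positive integer, and let $\mathcal{C}_i^{(n)}$ denote the $2$-cyclotomic coset of $i$ modulo $n$. Let $i,j$ with $0\le i<j\le n-1$ be integers not belonging to the same cyclotomic coset modulo $n$. Let $g$ be a positive integer with $(2^g-1)\mid n$. Suppose there exists an integer $r$ with $0<r<2^g-1$ and $\gcd(r,2^g-1)=1$ such that both $i$ and $j$ lie in $\mathcal{C}_r^{(2^g-1)}$, i.e. $i\bmod (2^g-1)$ and $j \bmod (2^g-1)$ belong to $\{r2^k \bmod (2^g-1): k\ge 0\}$. Then the binary cyclic code of length $n$ with generator polynomial $M_i(x)\cdot M_j(x)$ has minimum distance $d\le 3$. If moreover $\gcd(n,i,j)=1$, then $d=3$.
   Context: For odd $n$, $\alpha$ denotes a primitive $n$th root of unity in an extension field of $\mathbb{F}_2$. The cyclotomic coset of $r$ modulo $N$ (over $\mathbb{F}_2$) is $\mathcal{C}_r^{(N)}=\{r2^k \bmod N: k=0,1,\dots\}$. $M_i(x)=\prod_{t\in\mathcal{C}_i^{(n)}}(x-\alpha^t)\in\mathbb{F}_2[x]$ is the minimal polynomial of $\alpha^i$. The binary cyclic code with generator polynomial $G(x)\mid x^n-1$ is $\{c(x)\in\mathbb{F}_2[x]/(x^n-1): G(x)\mid c(x)\}$. *)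

(* Defs.v *)
From mathcomp Require Import all_boot all_order all_algebra.
Set Implicit Arguments. Unset Strict Implicit. Unset Printing Implicit Defensive.
Import GRing.Theory.
Local Open Scope ring_scope.

(* For N >= 1 every value of the sequence (r 2^k mod N)_k already appears
   among the first N terms (pigeonhole), so this finite enumeration is
   exactly the set { r 2^k mod N : k = 0,1,... }. *)
Definition cyc_coset (N r : nat) : seq nat :=
  undup [seq (r * 2 ^ k) %% N | k <- iota 0 N]%N.

Definition minpoly_i (L : fieldType) (n : nat) (alpha : L) (i : nat) : {poly L} :=
  \prod_(t <- cyc_coset n i) ('X - (alpha ^+ t)%:P).

Definition word_poly (L : fieldType) (n : nat) (c : {ffun 'I_n -> bool}) : {poly L} :=
  \sum_(k < n | c k) 'X^k.

Definition wt (n : nat) (c : {ffun 'I_n -> bool}) : nat := #|[set k | c k]|.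

Definition cyclic_code (L : fieldType) (n : nat) (G : {poly L}) :
  {ffun 'I_n -> bool} -> bool :=
  fun c => G %| word_poly L c.

Definition is_min_dist (n : nat) (C : {ffun 'I_n -> bool} -> bool) (d : nat) : Prop :=
  (exists c, [/\ C c, c != [ffun => false] & wt c = d]) /\
  (forall c, C c -> c != [ffun => false] -> (d <= wt c)%N).

(* Main.v *)
Require Import Defs.
From mathcomp Require Import all_boot all_order all_algebra.
From mathcomp Require Import zify.
Set Implicit Arguments. Unset Strict Implicit. Unset Printing Implicit Defensive.
Import GRing.Theory.

Lemma cyc_cosetP N r x : x \in cyc_coset N r -> exists k, x = (r * 2 ^ k) %% N.
Proof. by rewrite mem_undup => /mapP [k _ ->]; exists k. Qed.

Lemma cyc_coset_mem N r k : (k < N)%N -> (r * 2 ^ k) %% N \in cyc_coset N r.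
Proof. by move=> kN; rewrite mem_undup; apply/mapP; exists k; rewrite // mem_iota. Qed.

Lemma pow2_order n : odd n -> exists T, [/\ (0 < T)%N, (T <= n)%N & 2 ^ T %% n = 1 %% n].
Proof.
case: n => [//|n'] on.
pose f := fun x : 'I_n'.+1 => Ordinal (ltn_pmod (x * 2) (ltn0Sn n')).
have finj : injective f.
  move=> x y /(congr1 val) /= /eqP.
  have cop : coprime n'.+1 2 by rewrite coprime_sym coprime2n.
  wlog le : x y / (y <= x)%N.
    move=> H; case: (leqP y x) => [le|lt] E; first exact: H.
    by apply/esym/H; [exact: ltnW | rewrite eq_sym].
  rewrite eqn_mod_dvd ?leq_mul2r ?le ?orbT // -mulnBl Gauss_dvdl //.
  move=> D; apply/val_inj/eqP; rewrite eqn_leq le andbT.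
  move: D; rewrite -subn_eq0; case: (x - y)%N (leq_subr y x) => // d dle.
  have : (d.+1 < n'.+1)%N by apply: leq_ltn_trans dle (ltn_ord x).
  by move=> lt /(dvdn_leq (ltn0Sn d)); rewrite leqNgt lt.
have iterE k (x : 'I_n'.+1) : val (iter k f x) = (x * 2 ^ k) %% n'.+1.
  elim: k => [|k IH]; first by rewrite expn0 muln1 modn_small.
  by rewrite iterS /= IH modnMml expnSr mulnA.
pose x1 := Ordinal (ltn_pmod 1 (ltn0Sn n')).
exists (fingraph.order f x1); split.
- exact: order_gt0.
- by apply: leq_trans (max_card _) _; rewrite card_ord.
- have := congr1 val (iter_order finj x1); rewrite iterE /= modnMml mul1n => ->.
  done.
Qed.

Lemma pow_mod n T : 2 ^ T %% n = 1 %% n -> forall K, 2 ^ K = 2 ^ (K %% T) %[mod n].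
Proof.
move=> eT K; rewrite {1}(divn_eq K T) expnD [(K %/ T * T)%N]mulnC expnM.
rewrite -modnMml -modnXm eT modnXm exp1n modnMml mul1n. done.
Qed.

Lemma coset_disj n i j t : odd n -> (j < n)%N ->
  t \in cyc_coset n i -> t \in cyc_coset n j -> j \in cyc_coset n i.
Proof.
move=> on jn /cyc_cosetP [a ->] /cyc_cosetP [b E].
have [T [T0 Tn eT]] := pow2_order on.
set K := (a + b * (T - 1))%N.
have -> : j = (i * 2 ^ (K %% T)) %% n.
  rewrite -(modn_small jn).
  have e1 : j = j * 2 ^ (b * T) %[mod n].
    by rewrite [(b * T)%N]mulnC expnM -modnMmr -modnXm eT modnXm exp1n modnMmr muln1.
  rewrite e1 -[in RHS]modnMmr -(pow_mod eT) [in RHS]modnMmr.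
  have -> : (b * T = b + b * (T - 1))%N by rewrite mulnBr muln1 subnKC // leq_pmulr.
  rewrite expnD mulnA -modnMml -E modnMml -mulnA -expnD.
  done.
by apply: cyc_coset_mem; apply: leq_trans Tn; rewrite ltn_mod.
Qed.

Local Open Scope ring_scope.

Lemma frob2 (L : fieldType) (pL : (2 \in [pchar L])%N) (x y : L) e :
  (x + y) ^+ (2 ^ e) = x ^+ (2 ^ e) + y ^+ (2 ^ e).
Proof. by apply: exprDn_pchar; rewrite pnatX (pnatE _ (isT : prime 2)) pL. Qed.

Lemma word_poly_eval (L : fieldType) n (c : {ffun 'I_n -> bool}) (x : L) :
  (word_poly L c).[x] = \sum_(k in [set k | c k]) x ^+ k.
Proof.
rewrite /word_poly horner_sum; apply: eq_big => k; first by rewrite inE.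
by rewrite hornerXn.
Qed.

Lemma minpoly_root (L : fieldType) n (alpha : L) i : (i < n)%N ->
  root (minpoly_i n alpha i) (alpha ^+ i).
Proof.
move=> lt; rewrite /minpoly_i -(big_map (fun t => alpha ^+ t) xpredT (fun z => 'X - z%:P)).
rewrite root_prod_XsubC; apply/mapP; exists i => //.
by have := @cyc_coset_mem n i 0 (leq_ltn_trans (leq0n _) lt); rewrite expn0 muln1 modn_small.
Qed.

Lemma coset_to_m n m i r t : (m %| n)%N -> (i %% m)%N \in cyc_coset m r ->
  t \in cyc_coset n i -> exists e, (t %% m = r * 2 ^ e %% m)%N.
Proof.
move=> mn /cyc_cosetP [a Ea] /cyc_cosetP [k ->]; exists (a + k)%N.
by rewrite modn_dvdm // -modnMml Ea modnMml expnD mulnA.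
Qed.

Lemma gcd_arg n i j a b : (a < b)%N -> (b < n)%N ->
  (i * a = i * b %[mod n])%N -> (j * a = j * b %[mod n])%N ->
  gcdn (gcdn n i) j = 1%N -> False.
Proof.
move=> ab bn Ei Ej g1.
have Di : (n %| i * (b - a))%N.
  by rewrite mulnBr -eqn_mod_dvd ?leq_mul2l ?(ltnW ab) ?orbT // Ei.
have Dj : (n %| j * (b - a))%N.
  by rewrite mulnBr -eqn_mod_dvd ?leq_mul2l ?(ltnW ab) ?orbT // Ej.
have : (n %| gcdn (gcdn n i) j * (b - a))%N.
  by rewrite !muln_gcdl !dvdn_gcd dvdn_mulr // Di Dj.
rewrite g1 mul1n => /dvdn_leq; rewrite subn_gt0 ab => /(_ isT).
by rewrite leqNgt (leq_ltn_trans (leq_subr a b) bn).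
Qed.

Lemma low_wt (L : fieldType) (pL : (2 \in [pchar L])%N) n (alpha : L) i j
   (c : {ffun 'I_n -> bool}) : n.-primitive_root alpha -> (i < n)%N -> (j < n)%N ->
  gcdn (gcdn n i) j = 1%N ->
  (minpoly_i n alpha i * minpoly_i n alpha j) %| word_poly L c ->
  c != [ffun => false] -> (3 <= wt c)%N.
Proof.
move=> prim lin ljn g1 cw cnz.
have n0 : (0 < n)%N by apply: leq_ltn_trans lin.
have ri : root (word_poly L c) (alpha ^+ i).
  exact: root_dvdp (dvdp_trans (dvdp_mulIl _ _) cw) (minpoly_root _ lin).
have rj : root (word_poly L c) (alpha ^+ j).
  exact: root_dvdp (dvdp_trans (dvdp_mulIr _ _) cw) (minpoly_root _ ljn).
rewrite /wt; set S := [set k | c k].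
have anz : alpha != 0 by rewrite (prim_root_eq0 prim) -lt0n.
rewrite leqNgt; apply/negP.
case E: #|S| => [|[|[|s]]] // _.
- move/cards0_eq: E => S0; case/negP: cnz; apply/eqP/ffunP => k; rewrite !ffunE.
  apply/negbTE; have : k \notin S by rewrite S0 inE.
  by rewrite inE.
- move/eqP/cards1P: E => [a Sa]; move: ri; rewrite /root word_poly_eval -/S Sa big_set1.
  by rewrite -exprM expf_eq0 (negbTE anz) andbF.
- move/eqP/cards2P: E => [a [b [ab Sab]]].
  have key t : root (word_poly L c) (alpha ^+ t) -> (t * a = t * b %[mod n])%N.
    rewrite /root word_poly_eval -/S Sab big_setU1 ?big_set1 /=; last by rewrite inE.
    rewrite addr_eq0 oppr_pchar2 // -!exprM (eq_prim_root_expr prim).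
    by move/eqP.
  have Ei := key _ ri; have Ej := key _ rj.
  case: (ltngtP a b) => [lt|lt|eq].
  + exact: gcd_arg lt (ltn_ord b) Ei Ej g1.
  + exact: gcd_arg lt (ltn_ord a) (esym Ei) (esym Ej) g1.
  + by case/eqP: ab; apply: val_inj.
Qed.

Unset Implicit Arguments.

Theorem lemma2 (L : fieldType) (pL : (2 \in [pchar L])%N)
    (n : nat) (alpha : L) (i j g r : nat) :
  odd n -> n.-primitive_root alpha ->
  (i < j)%N -> (j <= n - 1)%N ->
  j \notin cyc_coset n i ->
  (0 < g)%N -> (2 ^ g - 1 %| n)%N ->
  (0 < r)%N -> (r < 2 ^ g - 1)%N -> coprime r (2 ^ g - 1) ->
  (i %% (2 ^ g - 1))%N \in cyc_coset (2 ^ g - 1) r ->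
  (j %% (2 ^ g - 1))%N \in cyc_coset (2 ^ g - 1) r ->
  exists d : nat,
    is_min_dist (@cyclic_code L n (minpoly_i n alpha i * minpoly_i n alpha j)) d
    /\ (d <= 3)%N
    /\ (gcdn (gcdn n i) j = 1%N -> d = 3%N).
Proof.
move=> on prim ij jn jni g0 mdn r0 rm cop icos jcos.
have n0 : (0 < n)%N by lia.
have ljn : (j < n)%N by lia.
have lin : (i < n)%N by lia.
have e2 : (2 ^ g = (2 ^ g - 1).+1)%N by rewrite subn1 prednK ?expn_gt0.
move: mdn rm cop icos jcos e2; set m := (2 ^ g - 1)%N => mdn rm cop icos jcos e2.
have m3 : (3 <= m)%N.
  have : (2 < 2 ^ g)%N by lia.
  move: e2; rewrite /m; case: (g) => [|[|g']] //; rewrite !expnS => _ _.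
  have := expn_gt0 2 g'; lia.
set nm := (n %/ m)%N.
have m0 : (0 < m)%N by apply: leq_trans m3.
have mn : (m <= n)%N by apply: dvdn_leq.
have nm0 : (0 < nm)%N by rewrite divn_gt0.
have nE : n = (nm * m)%N by rewrite divnK.
set beta := alpha ^+ nm.
have primb : m.-primitive_root beta by exact: dvdn_prim_root.
set gam := beta ^+ r.
have primg : m.-primitive_root gam by rewrite prim_root_exp_coprime.
have gm : gam ^+ m = 1 := prim_expr_order primg.
have g1 : gam != 1.
  apply/eqP => E; have := eq_prim_root_expr primg 1 0.
  rewrite expr1 expr0 E eqxx mod0n modn_small //; by apply: leq_trans m3.
have gnz : gam != 0 by rewrite (prim_root_eq0 primg) -lt0n m0.
have h1 : 1 + gam != 0.
  by apply/eqP => /eqP; rewrite addr_eq0 oppr_pchar2 // eq_sym (negbTE g1).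
have hm : (1 + gam) ^+ m = 1.
  have : (1 + gam) ^+ (2 ^ g) = 1 + gam by rewrite frob2 // expr1n e2 exprSr gm mul1r.
  rewrite e2 exprSr => H; apply: (mulIf h1); by rewrite mul1r.
have [v Hv] := prim_rootP primg hm.
have v1 : (1 < v)%N.
  move: Hv; case: v => [[|[|v']] vlt] //= Hv.
  - by move: Hv; rewrite expr0 -{2}[1]addr0 => /addrI /eqP; rewrite (negbTE gnz).
  - by move: Hv; rewrite expr1 -{2}[gam]add0r => /addIr /eqP; rewrite oner_eq0.
have vm : (v < m)%N := ltn_ord v.
set A := nm; set B := (nm * v)%N.
have key t e : (t %% m = r * 2 ^ e %% m)%N ->
    1 + alpha ^+ (t * A) + alpha ^+ (t * B) = 0.
  move=> te.
  have bt : beta ^+ t = gam ^+ (2 ^ e)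
    by rewrite -(prim_expr_mod primb) te (prim_expr_mod primb) exprM.
  have a1 : alpha ^+ (t * A) = gam ^+ (2 ^ e) by rewrite /A mulnC exprM -/beta bt.
  have a2 : alpha ^+ (t * B) = (gam ^+ v) ^+ (2 ^ e).
    by rewrite /B mulnCA exprM -/beta exprM bt -exprM [(2 ^ e * v)%N]mulnC exprM.
rewrite a1 a2 -[1](expr1n _ (2 ^ e)) -!frob2 // -Hv addrr_pchar2 // expr0n.
by rewrite expn_eq0.
have AB : (0 < A)%N /\ (A < B)%N by split; [exact: nm0 | exact: ltn_Pmulr].
have Bn : (B < n)%N by rewrite nE ltn_pmul2l.
have An : (A < n)%N := ltn_trans AB.2 Bn.
pose k0 : 'I_n := Ordinal n0.
pose kA : 'I_n := Ordinal An.
pose kB : 'I_n := Ordinal Bn.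
pose S3 := k0 |: [set kA; kB].
pose c3 := [ffun k => k \in S3].
have Sc3 : [set k | c3 k] = S3 by apply/setP => k; rewrite inE ffunE.
have nin2 : kA \notin [set kB].
  by rewrite inE; apply/eqP => /(congr1 val) /= E; move: AB; rewrite E ltnn; case.
have nin1 : k0 \notin [set kA; kB].
  rewrite !inE; apply/norP; split; apply/eqP => /(congr1 val) /= E.
    by move: AB; rewrite -E ltnn; case.
  by move: AB => [_]; rewrite -E ltn0.
have wt3 : wt c3 = 3%N.
  by rewrite /wt Sc3 /S3 cardsU1 nin1 cards2; move: nin2; rewrite inE => ->.
have c3nz : c3 != [ffun => false].
  by apply/negP => /eqP /ffunP /(_ k0); rewrite !ffunE !inE eqxx.
have c3code : cyclic_code (minpoly_i n alpha i * minpoly_i n alpha j) c3.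
  rewrite /cyclic_code /minpoly_i -big_cat.
  rewrite -(big_map (fun t => alpha ^+ t) xpredT (fun z => 'X - z%:P)).
  set s := (cyc_coset n i ++ cyc_coset n j).
  have s_lt t : t \in s -> (t < n)%N.
    by rewrite mem_cat => /orP [] /cyc_cosetP [k ->]; rewrite ltn_pmod.
  have Hall : all (root (word_poly L c3)) [seq alpha ^+ t | t <- s].
    apply/allP => x /mapP [t ts ->].
    rewrite /root word_poly_eval Sc3 /S3 big_setU1 // big_setU1 // big_set1 /=.
    rewrite expr0 -!exprM addrA.
    move: ts; rewrite mem_cat => /orP [] tc.
      by have [e te] := coset_to_m mdn icos tc; rewrite (key t e te).
    by have [e te] := coset_to_m mdn jcos tc; rewrite (key t e te).
  have Huniq : uniq_roots [seq alpha ^+ t | t <- s].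
    rewrite uniq_rootsE map_inj_in_uniq.
      rewrite cat_uniq !undup_uniq /= andbT.
      apply/hasPn => t tj; apply/negP => ti.
      by case/negP: jni; exact: (coset_disj on ljn ti tj).
    move=> t1 t2 t1s t2s /eqP; rewrite (eq_prim_root_expr prim) !modn_small ?s_lt //.
    by move/eqP.
  have [q ->] := uniq_roots_prod_XsubC Hall Huniq.
  exact: dvdp_mulIr.
pose P := fun k : nat => [exists c, [&& @cyclic_code L n (minpoly_i n alpha i * minpoly_i n alpha j) c,
   c != [ffun => false] & wt c == k]].
have P3 : P 3%N by apply/existsP; exists c3; rewrite c3code c3nz wt3 eqxx.
have exP : exists k, P k by exists 3%N.
case: (ex_minnP exP) => d Pd dmin.
exists d.
have d3 : (d <= 3)%N by apply: dmin.
split; [split | split => // g1'].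
- by move/existsP: Pd => [c /and3P [h1' h2 /eqP h3]]; exists c.
- move=> c cc cnz; apply: dmin; apply/existsP; exists c; rewrite cc cnz eqxx.
  done.
- apply/eqP; rewrite eqn_leq d3 /=.
  move/existsP: Pd => [c /and3P [cc cnz /eqP <-]].
  apply: (low_wt pL prim lin ljn g1' _ cnz). exact: cc.
Qed.
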